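(* There is an absolute constant $c>0$ such that for all integers $1\le k\le d$ there exists a finite transitive subset $X$ of the unit sphere in $\mathbb{R}^d$ such that for every $k$-dimensional subspace $W$ (either a real subspace of $\mathbb{R}^d$ or a complex subspace of $\mathbb{C}^d\supseteq\mathbb{R}^d$) one has \[\sup_{\mathbf{x}\in X}\|\mathrm{proj}_W\mathbf{x}\|_2\ge \frac{c}{\sqrt{\log(2d/k)}}.\]
   Context: A subset $X$ of the unit sphere of $\mathbb{R}^d$ is transitive if for every $x,x'\in X$ there is $g\in\mathsf{O}(\mathbb{R}^d)$ with $gX=X$ and $gx=x'$. $\mathrm{proj}_W$ denotes orthogonal projection onto $W$. *)

(* Defs.v *)
From HB Require Import structures.
From mathcomp Require Import all_boot all_order all_algebra.
From mathcomp Require Import Rstruct complex.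
From Stdlib Require Import Reals.
Set Implicit Arguments. Unset Strict Implicit. Unset Printing Implicit Defensive.
Import Order.TTheory GRing.Theory Num.Theory.
Local Open Scope ring_scope.

Notation RR := Rdefinitions.R.
Notation CC := (complex Rdefinitions.R).

Definition rnorm (d : nat) (v : 'rV[RR]_d) : RR :=
  Num.sqrt (\sum_(i < d) (v 0 i) ^+ 2).

Definition cnorm (d : nat) (v : 'rV[CC]_d) : RR :=
  Num.sqrt (\sum_(i < d) ((complex.Re (v 0 i)) ^+ 2 + (complex.Im (v 0 i)) ^+ 2)).

Definition rdot (d : nat) (u v : 'rV[RR]_d) : RR := \sum_(i < d) u 0 i * v 0 i.
Definition cdot (d : nat) (u v : 'rV[CC]_d) : CC := \sum_(i < d) u 0 i * (v 0 i)^*.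

Definition orthogonal_mx (d : nat) (g : 'M[RR]_d) : Prop := g *m g^T = 1%:M.

Definition on_unit_sphere (d : nat) (X : seq 'rV[RR]_d) : Prop :=
  forall x, x \in X -> rnorm x = 1.

Definition transitive_set (d : nat) (X : seq 'rV[RR]_d) : Prop :=
  forall x x', x \in X -> x' \in X ->
    exists g : 'M[RR]_d, orthogonal_mx g /\
      (forall y, y \in X <-> exists2 z, z \in X & y = z *m g) /\
      x *m g = x'.

(* Subspaces are represented mxalgebra-style as row spaces of square matrices.
   y is the orthogonal projection of x onto the real subspace W. *)
Definition is_rproj (d : nat) (W : 'M[RR]_d) (x y : 'rV[RR]_d) : Prop :=
  (y <= W)%MS /\ forall w : 'rV[RR]_d, (w <= W)%MS -> rdot (x - y) w = 0.

Definition is_cproj (d : nat) (W : 'M[CC]_d) (x y : 'rV[CC]_d) : Prop :=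
  (y <= W)%MS /\ forall w : 'rV[CC]_d, (w <= W)%MS -> cdot (x - y) w = 0.

Definition complexify (d : nat) (x : 'rV[RR]_d) : 'rV[CC]_d :=
  map_mx (fun r : RR => (r%:C)%C) x.

(* Main.v *)
Require Import Defs.
From HB Require Import structures.
From mathcomp Require Import all_boot all_order all_algebra.
From mathcomp Require Import Rstruct complex spectral fingroup perm.
From mathcomp Require Import ring lra.
Import Order.TTheory GRing.Theory Num.Theory.
Local Open Scope ring_scope.
Set Implicit Arguments. Unset Strict Implicit. Unset Printing Implicit Defensive.
Fixpoint Esg (n : nat) (G : seq bool -> RR) : RR :=
  match n with
  | 0 => G [::]
  | n'.+1 => (Esg n' (fun s => G (true :: s)) + Esg n' (fun s => G (false :: s))) / 2
  end.

Definition sg (b : bool) : RR := if b then 1 else -1.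

Fixpoint Ssum (s : seq bool) (r : nat -> RR) : RR :=
  match s with
  | [::] => 0
  | b :: s' => sg b * r 0%N + Ssum s' (fun a => r a.+1)
  end.

Lemma Esg_lin n a G H :
  Esg n (fun s => a * G s + H s) = a * Esg n G + Esg n H.
Proof.
elim: n G H => [|n IH] G H //=.
rewrite (IH (fun s => G (true :: s))) (IH (fun s => G (false :: s))).
by field.
Qed.

Lemma Esg_cst n c : Esg n (fun _ => c) = c.
Proof. elim: n c => [|n IH] c //=; rewrite !IH; by field. Qed.

Lemma Esg_le n G H : (forall s, G s <= H s) -> Esg n G <= Esg n H.
Proof.
elim: n G H => [|n IH] G H GH //=.
have h1 := IH (fun s => G (true :: s)) (fun s => H (true :: s)) (fun s => GH _).
have h2 := IH (fun s => G (false :: s)) (fun s => H (false :: s)) (fun s => GH _).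
lra.
Qed.

Lemma Esg_ext n G H : (forall s, G s = H s) -> Esg n G = Esg n H.
Proof.
move=> GH; apply/eqP; rewrite eq_le !Esg_le // => s; rewrite GH //.
Qed.

Lemma Esg_add n G H : Esg n (fun s => G s + H s) = Esg n G + Esg n H.
Proof.
rewrite -(mul1r (Esg n G)) -Esg_lin; apply: Esg_ext => s; by rewrite mul1r.
Qed.

Lemma Esg_scale n a G : Esg n (fun s => a * G s) = a * Esg n G.
Proof.
rewrite -(addr0 (a * Esg n G)) -(Esg_cst n 0) -Esg_lin; apply: Esg_ext => s; by rewrite addr0.
Qed.

Lemma Esg_sum n m (G : 'I_m -> seq bool -> RR) :
  Esg n (fun s => \sum_(j < m) G j s) = \sum_(j < m) Esg n (G j).
Proof.
elim: m G => [|m IH] G.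
  by rewrite (@Esg_ext n _ (fun _ => 0)) ?Esg_cst ?big_ord0 // => s; rewrite big_ord0.
rewrite big_ord_recr /= -IH -Esg_add; apply: Esg_ext => s.
by rewrite big_ord_recr.
Qed.

Lemma Esg_exists n G : exists s, Esg n G <= G s.
Proof.
elim: n G => [|n IH] G /=; first by exists [::].
have [s1 h1] := IH (fun s => G (true :: s)).
have [s2 h2] := IH (fun s => G (false :: s)).
case: (lerP (G (true :: s1)) (G (false :: s2))) => h.
  exists (false :: s2); lra.
exists (true :: s1); lra.
Qed.

Definition Qs (n : nat) (r : nat -> RR) := \sum_(a < n) r a ^+ 2.

Lemma Qs_S n r : Qs n.+1 r = r 0%N ^+ 2 + Qs n (fun a => r a.+1).
Proof. by rewrite /Qs big_ord_recl. Qed.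

Lemma Qs_ge0 n r : 0 <= Qs n r.
Proof. by apply: sumr_ge0 => i _; apply: sqr_ge0. Qed.

Lemma Esg_M2 n (c : RR) r :
  Esg n (fun s => (c + Ssum s r) ^+ 2) = c ^+ 2 + Qs n r.
Proof.
elim: n c r => [|n IH] c r /=; first by rewrite /Qs big_ord0 addr0 addr0.
rewrite (@Esg_ext n (fun s => (c + Ssum (true :: s) r) ^+ 2)
                 (fun s => ((c + r 0%N) + Ssum s (fun a => r a.+1)) ^+ 2)); last first.
  by move=> s /=; rewrite /sg mul1r addrA.
rewrite (@Esg_ext n (fun s => (c + Ssum (false :: s) r) ^+ 2)
                 (fun s => ((c - r 0%N) + Ssum s (fun a => r a.+1)) ^+ 2)); last first.
  by move=> s /=; rewrite /sg mulN1r addrA.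
rewrite !IH Qs_S; by field.
Qed.

Lemma Esg_M4 n (c : RR) r :
  Esg n (fun s => (c + Ssum s r) ^+ 4) <= c ^+ 4 + 6 * c ^+ 2 * Qs n r + 3 * Qs n r ^+ 2.
Proof.
elim: n c r => [|n IH] c r /=.
  by rewrite /Qs big_ord0 !addr0 mulr0 addr0 expr0n /= mulr0 addr0.
rewrite (@Esg_ext n (fun s => (c + Ssum (true :: s) r) ^+ 4)
                 (fun s => ((c + r 0%N) + Ssum s (fun a => r a.+1)) ^+ 4)); last first.
  by move=> s /=; rewrite /sg mul1r addrA.
rewrite (@Esg_ext n (fun s => (c + Ssum (false :: s) r) ^+ 4)
                 (fun s => ((c - r 0%N) + Ssum s (fun a => r a.+1)) ^+ 4)); last first.
  by move=> s /=; rewrite /sg mulN1r addrA.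
have h1 := IH (c + r 0%N) (fun a => r a.+1).
have h2 := IH (c - r 0%N) (fun a => r a.+1).
rewrite Qs_S.
set Q := Qs n _ in h1 h2 *.
set e1 := Esg n _ in h1 *. set e2 := Esg n _ in h2 *.
have hr : 0 <= r 0%N ^+ 4.
  by rewrite (_ : 4 = 2 * 2)%N // exprM sqr_ge0.
suff : (e1 + e2) / 2 <= c ^+ 4 + 6 * c ^+ 2 * (r 0%N ^+ 2 + Q) + 3 * (r 0%N ^+ 2 + Q) ^+ 2 - 2 * r 0%N ^+ 4.
  lra.
have -> : c ^+ 4 + 6 * c ^+ 2 * (r 0%N ^+ 2 + Q) + 3 * (r 0%N ^+ 2 + Q) ^+ 2 - 2 * r 0%N ^+ 4
  = ((c + r 0%N) ^+ 4 + 6 * (c + r 0%N) ^+ 2 * Q + 3 * Q ^+ 2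
    + ((c - r 0%N) ^+ 4 + 6 * (c - r 0%N) ^+ 2 * Q + 3 * Q ^+ 2)) / 2.
  by field.
lra.
Qed.

Lemma sq_le_abs (x t : RR) : 0 < t -> x ^+ 2 <= t * `|x| + x ^+ 4 / t ^+ 2.
Proof.
move=> t0.
have hx2 : x ^+ 2 = `|x| * `|x| by rewrite -normrM -expr2 ger0_norm ?sqr_ge0.
have hx4 : x ^+ 4 = x ^+ 2 * x ^+ 2 by rewrite -exprD.
have ha := normr_ge0 x.
have hq : 0 <= x ^+ 4 / t ^+ 2.
  apply: divr_ge0; last exact: sqr_ge0.
  by rewrite hx4; apply: mulr_ge0; exact: sqr_ge0.
case: (lerP `|x| t) => h.
  have : x ^+ 2 <= t * `|x| by rewrite hx2 ler_wpM2r.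
  lra.
have : x ^+ 2 <= x ^+ 4 / t ^+ 2.
  rewrite ler_pdivlMr ?exprn_gt0 // hx4 ler_wpM2l ?sqr_ge0 //.
  rewrite hx2 expr2; apply: ler_pM; rewrite ?ltW //.
have : 0 <= t * `|x| by rewrite mulr_ge0 // ltW.
lra.
Qed.

Lemma khint n r : Num.sqrt (Qs n r) <= 8 * Esg n (fun s => `|Ssum s r|).
Proof.
have E0 : 0 <= Esg n (fun s => `|Ssum s r|).
  by rewrite -(Esg_cst n 0); apply: Esg_le => s.
have hQ := Qs_ge0 n r.
set Q := Qs n r in hQ *.
set E := Esg n _ in E0 *.
have [Q0|Qp] := eqVneq Q 0.
  by rewrite Q0 sqrtr0 mulr_ge0.
have Qgt : 0 < Q by rewrite lt_def Qp.
have sq := sqrtr_gt0 Q; rewrite Qgt in sq.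
set q := Num.sqrt Q in sq *.
have qq : q * q = Q by rewrite -expr2 sqr_sqrtr.
have t0 : 0 < 2 * q by rewrite mulr_gt0.
have h := Esg_le n (fun s => sq_le_abs (Ssum s r) t0).
rewrite Esg_add Esg_scale in h.
have h2 := Esg_M2 n 0 r.
rewrite (@Esg_ext n (fun s => (0 + Ssum s r) ^+ 2) (fun s => Ssum s r ^+ 2)) in h2; last first.
  by move=> s; rewrite add0r.
rewrite h2 expr0n /= add0r in h.
have h4 := Esg_M4 n 0 r.
rewrite (@Esg_ext n (fun s => (0 + Ssum s r) ^+ 4) (fun s => Ssum s r ^+ 4)) in h4; last first.
  by move=> s; rewrite add0r.
rewrite !expr0n /= mulr0 mul0r add0r in h4.
rewrite (@Esg_ext n (fun s => Ssum s r ^+ 4 / (2 * q) ^+ 2) (fun s => (2 * q) ^-2 * Ssum s r ^+ 4)) in h; last first.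
  by move=> s; rewrite mulrC.
rewrite Esg_scale in h.
rewrite -/Q -/E in h h4.
have h5 : (2 * q) ^-2 * Esg n (fun s => Ssum s r ^+ 4) <= 3 / 4 * Q.
  have -> : 3 / 4 * Q = (2 * q) ^-2 * (3 * Q ^+ 2).
    rewrite -qq; field; exact: lt0r_neq0.
  apply: ler_wpM2l; first by rewrite invr_ge0 sqr_ge0.
  by rewrite add0r in h4.
have : Q <= 2 * q * E + 3 / 4 * Q by lra.
rewrite -qq => h6.
have : q * q <= q * (8 * E) by nra.
by rewrite ler_pM2l.
Qed.

Lemma Esg_le_sz n G H : (forall s, size s = n -> G s <= H s) -> Esg n G <= Esg n H.
Proof.
elim: n G H => [|n IH] G H GH /=; first exact: GH.
have h1 := IH (fun s => G (true :: s)) (fun s => H (true :: s)) (fun s hs => GH (true :: s) (congr1 S hs)).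
have h2 := IH (fun s => G (false :: s)) (fun s => H (false :: s)) (fun s hs => GH (false :: s) (congr1 S hs)).
lra.
Qed.

Lemma Ssum_nat s r : Ssum s r = \sum_(0 <= a < size s) sg (nth false s a) * r a.
Proof.
elim: s r => [|b s IH] r /=; first by rewrite big_nil.
by rewrite big_nat_recl // IH.
Qed.

Definition ext m (f : 'I_m -> RR) : nat -> RR :=
  fun a => if insub a is Some i then f i else 0.

Lemma ext_val m (f : 'I_m -> RR) (i : 'I_m) : ext f i = f i.
Proof. by rewrite /ext valK. Qed.

Lemma Ssum_ext m (f : 'I_m -> RR) s : size s = m ->
  Ssum s (ext f) = \sum_(a < m) sg (nth false s a) * f a.
Proof.
move=> sz; rewrite Ssum_nat sz big_mkord; apply: eq_bigr => a _; by rewrite ext_val.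
Qed.

Lemma Qs_ext m (f : 'I_m -> RR) : Qs m (ext f) = \sum_(a < m) f a ^+ 2.
Proof. by apply: eq_bigr => a _; rewrite ext_val. Qed.

Lemma khint_ord m (f : 'I_m -> RR) (g : seq bool -> RR) :
  (forall s, size s = m -> g s = \sum_(a < m) sg (nth false s a) * f a) ->
  Num.sqrt (\sum_(a < m) f a ^+ 2) <= 8 * Esg m (fun s => `|g s|).
Proof.
move=> hg; rewrite -Qs_ext; apply: (le_trans (khint m (ext f))).
rewrite ler_pM2l //; apply: Esg_le_sz => s sz.
by rewrite Ssum_ext // hg.
Qed.
Section RankPerm.
Variables (d : nat) (p : 'I_d -> RR).
Hypothesis p0 : forall j, 0 <= p j.

Definition prec (i j : 'I_d) := (p j < p i) || ((p i == p j) && (i < j)%N).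

Lemma prec_irr j : prec j j = false.
Proof. by rewrite /prec ltxx eqxx ltnn. Qed.

Lemma prec_trans a b c : prec a b -> prec b c -> prec a c.
Proof.
rewrite /prec => /orP[h1|/andP[/eqP e1 h1]] /orP[h2|/andP[/eqP e2 h2]].
- by rewrite (lt_trans h2 h1).
- by rewrite -e2 h1.
- by rewrite e1 h2.
- by rewrite e1 e2 eqxx (ltn_trans h1 h2) orbT.
Qed.

Lemma prec_total i j : i != j -> prec i j || prec j i.
Proof.
move=> ij; rewrite /prec.
case: (ltgtP (p i) (p j)) => h; rewrite ?orbT //= ?h ?eqxx /=.
case: (ltngtP i j) => //.
by move=> /val_inj e; rewrite e eqxx in ij.
Qed.

Lemma prec_le i j : prec i j -> p j <= p i.
Proof. by rewrite /prec => /orP[/ltW //|/andP[/eqP -> _]]. Qed.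

Definition rk (j : 'I_d) := #|[set i | prec i j]|.

Lemma rk_lt j : (rk j < d)%N.
Proof.
have : [set i | prec i j] \subset [set~ j].
  by apply/subsetP => i; rewrite !inE => h; apply/eqP => e; rewrite e prec_irr in h.
move/subset_leq_card => h; rewrite /rk; apply: (leq_ltn_trans h).
by rewrite cardsC1 card_ord ltn_predL (leq_ltn_trans (leq0n j) (ltn_ord j)).
Qed.

Lemma rk_prec i j : prec i j -> (rk i < rk j)%N.
Proof.
move=> h; apply: proper_card; apply/properP; split.
  by apply/subsetP => l; rewrite !inE => h'; exact: prec_trans h' h.
by exists i; rewrite !inE ?h ?prec_irr.
Qed.

Lemma rk_inj : injective rk.
Proof.
move=> i j e; apply/eqP; apply/negPn/negP => ij.
by case/orP: (prec_total ij) => /rk_prec; rewrite e ltnn.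
Qed.

Definition rkf (j : 'I_d) : 'I_d := Ordinal (rk_lt j).

Lemma rkf_inj : injective rkf.
Proof. by move=> i j /(congr1 val) /= /rk_inj. Qed.

Lemma rk_bound j : (rk j).+1%:R * p j <= \sum_l p l.
Proof.
have -> : (rk j).+1%:R * p j = \sum_l (if prec l j || (l == j) then p j else 0).
  rewrite -big_mkcond /= sumr_const mulr_natl; congr (_ *+ _).
  rewrite -(@eq_card _ (j |: [set i | prec i j])); last first.
    by move=> l; rewrite !inE orbC.
  by rewrite cardsU1 !inE prec_irr.
apply: ler_sum => l _; case: ifP => [/orP[/prec_le //|/eqP -> //]|_].
exact: p0.
Qed.

Lemma rank_perm : exists s : {perm 'I_d}, forall j, (s j).+1%:R * p j <= \sum_l p l.
Proof.
exists (perm rkf_inj) => j; rewrite permE /=; exact: rk_bound.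
Qed.
End RankPerm.
Section Orbit.
Variables (d : nat) (v : 'I_d -> RR).

Definition mkx (t : {ffun 'I_d -> bool} * {perm 'I_d}) : 'rV[RR]_d :=
  \row_i ((-1) ^+ t.1 i * v (t.2 i)).

Definition Xset : seq 'rV[RR]_d :=
  [seq mkx t | t <- enum {: {ffun 'I_d -> bool} * {perm 'I_d}}].

Lemma XsetP x : reflect (exists t, x = mkx t) (x \in Xset).
Proof.
apply: (iffP mapP) => [[t _ ->]|[t ->]]; first by exists t.
by exists t; rewrite ?mem_enum.
Qed.

Definition Gm (s : {ffun 'I_d -> bool}) (tau : {perm 'I_d}) : 'M[RR]_d :=
  \matrix_(i, j) (if tau i == j then (-1) ^+ s i else 0).

Lemma mulGm (x : 'rV[RR]_d) s tau j :
  (x *m Gm s tau) 0 j = x 0 ((tau^-1)%g j) * (-1) ^+ s ((tau^-1)%g j).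
Proof.
rewrite mxE (bigD1 ((tau^-1)%g j)) //= mxE permKV eqxx big1 ?addr0 // => i ij.
rewrite mxE; case: eqP => [e|]; last by rewrite mulr0.
by move: ij; rewrite -e permK eqxx.
Qed.

Lemma mkxG t s tau :
  mkx t *m Gm s tau = mkx ([ffun j => t.1 ((tau^-1)%g j) (+) s ((tau^-1)%g j)], ((tau^-1)%g * t.2)%g).
Proof.
apply/rowP => j; rewrite mulGm !mxE ffunE permM signr_addb.
by rewrite mulrAC.
Qed.

Lemma Gm_orth s tau : orthogonal_mx (Gm s tau).
Proof.
rewrite /orthogonal_mx; apply/matrixP => i j; rewrite !mxE.
rewrite (bigD1 (tau i)) //= !mxE eqxx big1 ?addr0; last first.
  by move=> l li; rewrite !mxE eq_sym (negPf li) mul0r.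
case: (eqVneq i j) => [->|ij]; first by rewrite eqxx -signr_addb addbb.
by rewrite (inj_eq perm_inj) eq_sym (negPf ij) mulr0.
Qed.

Lemma Xset_trans : transitive_set Xset.
Proof.
move=> x x' /XsetP[t ->] /XsetP[t' ->].
pose tau := ((t'.2 * t.2^-1)^-1)%g.
pose s := [ffun i => t.1 i (+) t'.1 (tau i)].
exists (Gm s tau); split; first exact: Gm_orth.
split.
  move=> y; split.
    move=> /XsetP[u ->].
    exists (mkx ([ffun i => u.1 (tau i) (+) s i], (tau * u.2)%g)).
      by apply/XsetP; eexists.
    rewrite mkxG; congr (mkx (_, _)).
      by apply/ffunP => j; rewrite !ffunE permKV addbK.
    by rewrite mulgA mulVg mul1g.
  move=> [z /XsetP[u ->] ->]; rewrite mkxG; apply/XsetP; eexists; reflexivity.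
rewrite mkxG; congr (mkx (_, _)).
  apply/ffunP => j; rewrite !ffunE permKV.
  by rewrite addbA addbb.
by rewrite invgK -mulgA mulVg mulg1.
Qed.

Hypothesis v1 : \sum_i v i ^+ 2 = 1.

Lemma Xset_sphere : on_unit_sphere Xset.
Proof.
move=> x /XsetP[t ->]; rewrite /rnorm.
rewrite (eq_bigr (fun i => v (t.2 i) ^+ 2)); last first.
  by move=> i _; rewrite mxE exprMn sqrr_sign mul1r.
by rewrite -(@reindex_inj _ _ _ _ t.2 xpredT (fun i => v i ^+ 2) (@perm_inj _ t.2)) v1 sqrtr1.
Qed.
End Orbit.
Local Notation ln := Rpower.ln.

Lemma IZR2 : Rdefinitions.IZR (BinNums.Zpos (BinNums.xO BinNums.xH)) = 2 :> RR.
Proof. by rewrite IZRposE INRE. Qed.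

Lemma ln_le_sub1 (x : RR) : 0 < x -> ln x <= x - 1.
Proof.
move=> x0; have h := Rpower.exp_ineq1_le (ln x).
rewrite Rpower.exp_ln in h; last by apply/RltP.
move/RleP: h; rewrite RplusE R1E => h; lra.
Qed.

Lemma ln_mulE (x y : RR) : 0 < x -> 0 < y -> ln (x * y) = ln x + ln y.
Proof. by move=> /RltP x0 /RltP y0; rewrite Rpower.ln_mult. Qed.

Lemma ln_invE (x : RR) : 0 < x -> ln (x^-1) = - ln x.
Proof. by move=> /RltP x0; rewrite -RinvE Rpower.ln_Rinv. Qed.

Lemma ln_le_mono (x y : RR) : 0 < x -> x <= y -> ln x <= ln y.
Proof.
move=> x0; rewrite le_eqVlt => /orP[/eqP->//|xy].
by apply/RleP; apply: RIneq.Rlt_le; apply: Rpower.ln_increasing; apply/RltP.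
Qed.

Lemma ln2_gt : 2^-1 < ln 2 :> RR.
Proof. have := Rpower.ln_lt_2; rewrite IZR2 RinvE; by move/RltP. Qed.

Definition Hs (k d : nat) : RR := \sum_(j < d) ((maxn j.+1 k)%:R)^-1.

Lemma harm_step (n : nat) : (0 < n)%N -> ((n.+1)%:R : RR)^-1 <= ln (n.+1)%:R - ln n%:R.
Proof.
move=> n0.
have np : 0 < (n%:R : RR) by rewrite ltr0n.
have n1p : 0 < ((n.+1)%:R : RR) by rewrite ltr0n.
have h := ln_le_sub1 (divr_gt0 np n1p).
rewrite ln_mulE ?invr_gt0 // ln_invE // in h.
have e : (n%:R / (n.+1)%:R - 1 : RR) = - ((n.+1)%:R)^-1.
  rewrite -natr1; field; rewrite natr1; exact: lt0r_neq0.
by move: h; rewrite e lerNr opprB.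
Qed.

Lemma Hs_bound k m : (0 < k)%N -> Hs k (k + m) <= 1 + ln (k + m)%:R - ln k%:R.
Proof.
move=> k0; elim: m => [|m IH].
  rewrite addn0 addrK /Hs.
  rewrite (eq_bigr (fun _ => (k%:R : RR)^-1)); last first.
    by move=> j _; rewrite (maxn_idPr _) // ltn_ord.
  rewrite sumr_const card_ord -[_^-1 *+ k]mulr_natr mulVf //.
  by rewrite pnatr_eq0 -lt0n.
rewrite /Hs addnS big_ord_recr /= -/(Hs k (k + m)).
rewrite (maxn_idPl _); last exact: leqW (leq_addr m k).
have := harm_step (ltn_addr m k0).
set u := (_^-1 : RR).
lra.
Qed.

Lemma Hs_log k d : (0 < k)%N -> (k <= d)%N -> Hs k d <= 2 * ln ((2 * d)%:R / k%:R).
Proof.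
move=> k0 kd; rewrite -(subnKC kd).
have h := Hs_bound (d - k) k0.
set D := (k + (d - k))%N in h *.
have kp : 0 < (k%:R : RR) by rewrite ltr0n.
have dp : 0 < (D%:R : RR) by rewrite ltr0n /D ltn_addr.
have tp : 0 < (2 : RR) by [].
have e : ln ((2 * D)%:R / k%:R) = ln 2 + ln D%:R - ln k%:R.
  rewrite natrM ln_mulE; last by rewrite invr_gt0.
    by rewrite ln_mulE // ln_invE.
  exact: mulr_gt0.
rewrite e.
have hl := ln2_gt.
have hkd : ln k%:R <= ln D%:R.
  by apply: ln_le_mono => //; rewrite ler_nat /D leq_addr.
lra.
Qed.
Local Notation Re := complex.Re.
Local Notation Im := complex.Im.

Definition ctr n p (M : 'M[CC]_(n, p)) : 'M[CC]_(p, n) := map_mx Num.conj M^T.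

Lemma ctr_mul n p q (A : 'M[CC]_(n, p)) (B : 'M[CC]_(p, q)) :
  ctr (A *m B) = ctr B *m ctr A.
Proof. by rewrite /ctr trmx_mul map_mxM. Qed.

Lemma mulJ (z : CC) : z * Num.conj z = ((Re z) ^+ 2 + (Im z) ^+ 2)%:C%C.
Proof.
case: z => a b; apply/eqP; rewrite eq_complex /=; apply/andP; split; apply/eqP; ring.
Qed.

Lemma Re_rmul (r : RR) (z : CC) : Re ((r%:C)%C * z) = r * Re z.
Proof. by case: z => a b /=; ring. Qed.

Lemma Im_rmul (r : RR) (z : CC) : Im ((r%:C)%C * z) = r * Im z.
Proof. by case: z => a b /=; ring. Qed.

Definition sqn n (y : 'rV[CC]_n) : RR := \sum_i (Re (y 0 i) ^+ 2 + Im (y 0 i) ^+ 2).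

Lemma sqn_ge0 n (y : 'rV[CC]_n) : 0 <= sqn y.
Proof. by apply: sumr_ge0 => i _; apply: addr_ge0; apply: sqr_ge0. Qed.

Lemma sqn_mx n (y : 'rV[CC]_n) : (y *m ctr y) 0 0 = ((sqn y)%:C)%C.
Proof.
rewrite mxE /sqn rmorph_sum; apply: eq_bigr => i _.
by rewrite /ctr !mxE mulJ.
Qed.

Section UnitSec.
Variables (m d : nat) (U : 'M[CC]_(m, d)).
Hypothesis Uu : U *m ctr U = 1%:M.

Lemma sqn_qU (q : 'rV[CC]_m) : sqn (q *m U) = sqn q.
Proof.
apply: (@complexI RR); rewrite -!sqn_mx ctr_mul mulmxA -(mulmxA q) Uu mulmx1.
by [].
Qed.

Definition pc (j : 'I_d) : RR := \sum_(a < m) (Re (U a j) ^+ 2 + Im (U a j) ^+ 2).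

Lemma pc_ge0 j : 0 <= pc j.
Proof. by apply: sumr_ge0 => i _; apply: addr_ge0; apply: sqr_ge0. Qed.

Lemma pc_sum : \sum_j pc j = m%:R.
Proof.
rewrite /pc exchange_big /=.
rewrite (eq_bigr (fun _ => 1)) ?sumr_const ?card_ord //.
move=> a _.
have h := sqn_qU (delta_mx 0 a); rewrite -rowE in h.
transitivity (sqn (row a U)).
  by rewrite /sqn; apply: eq_bigr => i _; rewrite mxE.
rewrite h /sqn (bigD1 a) //= big1 ?addr0; last first.
  by move=> i ia; rewrite mxE /= (negPf ia) /= expr0n /= addr0.
by rewrite mxE !eqxx /= expr1n expr0n /= addr0.
Qed.

Lemma pc_le1 j : pc j <= 1.
Proof.
pose q : 'rV[CC]_m := \row_a Num.conj (U a j).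
have e1 : sqn (q *m U) = pc j.
  rewrite sqn_qU /sqn /pc; apply: eq_bigr => a _; rewrite mxE.
  by case: (U a j) => x y /=; ring.
have e2 : (q *m U) 0 j = ((pc j)%:C)%C.
  rewrite mxE /pc rmorph_sum; apply: eq_bigr => a _; rewrite mxE mulrC mulJ //.
have h : Re ((q *m U) 0 j) ^+ 2 <= sqn (q *m U).
  rewrite /sqn (bigD1 j) //= -addrA lerDl addr_ge0 ?sqr_ge0 //.
  by apply: sumr_ge0 => i _; apply: addr_ge0; apply: sqr_ge0.
rewrite e1 e2 /= in h.
have p0 := pc_ge0 j.
case: (eqVneq (pc j) 0) => [->|pn]; first by [].
have pp : 0 < pc j by rewrite lt_def pn.
by rewrite -(ler_pM2l pp) mulr1 -expr2.
Qed.

Definition wv (s : seq bool) : 'rV[CC]_d :=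
  (\row_(a < m) ((sg (nth false s a))%:C)%C) *m U.

Lemma wv_sub s : (wv s <= U)%MS.
Proof. exact: submxMl. Qed.

Lemma wv_sqn s : sqn (wv s) = m%:R.
Proof.
rewrite sqn_qU /sqn (eq_bigr (fun _ => 1)) ?sumr_const ?card_ord // => a _.
by rewrite mxE /=; case: (nth false s a) => /=; ring.
Qed.

Lemma wv_Re s j : Re (wv s 0 j) = \sum_(a < m) sg (nth false s a) * Re (U a j).
Proof.
rewrite mxE raddf_sum; apply: eq_bigr => a _; rewrite mxE; exact: Re_rmul.
Qed.

Lemma wv_Im s j : Im (wv s 0 j) = \sum_(a < m) sg (nth false s a) * Im (U a j).
Proof.
rewrite mxE raddf_sum; apply: eq_bigr => a _; rewrite mxE; exact: Im_rmul.
Qed.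

Lemma sqrt_add_le (A B : RR) : 0 <= A -> 0 <= B ->
  Num.sqrt (A + B) <= Num.sqrt A + Num.sqrt B.
Proof.
move=> A0 B0.
have sA := sqrtr_ge0 A; have sB := sqrtr_ge0 B.
rewrite -(ger0_norm (addr_ge0 sA sB)) -sqrtr_sqr ler_sqrt ?sqr_ge0 //.
rewrite sqrrD !sqr_sqrtr //.
have : 0 <= Num.sqrt A * Num.sqrt B *+ 2 by rewrite mulrn_wge0 // mulr_ge0.
lra.
Qed.

Lemma col_khint j :
  Num.sqrt (pc j) <= 8 * (Esg m (fun s => `|Re (wv s 0 j)|) + Esg m (fun s => `|Im (wv s 0 j)|)).
Proof.
have h1 := @khint_ord m (fun a => Re (U a j)) (fun s => Re (wv s 0 j)) (fun s _ => wv_Re s j).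
have h2 := @khint_ord m (fun a => Im (U a j)) (fun s => Im (wv s 0 j)) (fun s _ => wv_Im s j).
have h3 : Num.sqrt (pc j) <= Num.sqrt (\sum_(a < m) Re (U a j) ^+ 2) + Num.sqrt (\sum_(a < m) Im (U a j) ^+ 2).
  rewrite /pc big_split /=; apply: sqrt_add_le; apply: sumr_ge0 => a _; exact: sqr_ge0.
lra.
Qed.

Lemma avg_main (c : 'I_d -> RR) : (forall j, 0 <= c j) ->
  (forall j, pc j <= Num.sqrt m%:R * (c j * Num.sqrt (pc j))) ->
  exists s, Num.sqrt m%:R <= 16 * \sum_j c j * `|Re (wv s 0 j)|
         \/ Num.sqrt m%:R <= 16 * \sum_j c j * `|Im (wv s 0 j)|.
Proof.
move=> c0 hc.
pose T s := \sum_j c j * (`|Re (wv s 0 j)| + `|Im (wv s 0 j)|).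
have hS : Num.sqrt m%:R <= \sum_j c j * Num.sqrt (pc j).
  have Sge : 0 <= \sum_j c j * Num.sqrt (pc j).
    by apply: sumr_ge0 => j _; rewrite mulr_ge0 ?sqrtr_ge0.
  have hm : m%:R <= Num.sqrt m%:R * \sum_j c j * Num.sqrt (pc j).
    by rewrite -[X in X <= _]pc_sum mulr_sumr; apply: ler_sum => j _; exact: hc.
  have sm := sqrtr_ge0 (m%:R : RR).
  case: (eqVneq (Num.sqrt (m%:R : RR)) 0) => [->//|sn].
  have sp : 0 < Num.sqrt (m%:R : RR) by rewrite lt_def sn.
  rewrite -(ler_pM2l sp) -expr2 sqr_sqrtr //.
have hE : \sum_j c j * Num.sqrt (pc j) <= 8 * Esg m T.
  rewrite /T Esg_sum mulr_sumr; apply: ler_sum => j _.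
  rewrite (@Esg_ext m _ (fun s => c j * `|Re (wv s 0 j)| + c j * `|Im (wv s 0 j)|)); last first.
    by move=> s; rewrite mulrDr.
  rewrite Esg_add !Esg_scale -mulrDr mulrCA ler_wpM2l //.
  exact: col_khint.
have [s hs] := Esg_exists m T.
exists s.
have : T s = \sum_j c j * `|Re (wv s 0 j)| + \sum_j c j * `|Im (wv s 0 j)|.
  by rewrite /T -big_split /=; apply: eq_bigr => j _; rewrite mulrDr.
move=> eT; rewrite eT in hs.
set a := \sum_j c j * `|Re (wv s 0 j)| in hs *.
set b := \sum_j c j * `|Im (wv s 0 j)| in hs *.
case: (lerP (Num.sqrt m%:R) (16 * a)) => h; first by left.
right; lra.
Qed.
End UnitSec.
Lemma cs2 n (a b c e : 'I_n -> RR) :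
  \sum_j (a j * c j + b j * e j) <=
  Num.sqrt (\sum_j (a j ^+ 2 + b j ^+ 2)) * Num.sqrt (\sum_j (c j ^+ 2 + e j ^+ 2)).
Proof.
set P := \sum_j (a j ^+ 2 + b j ^+ 2); set Q := \sum_j (c j ^+ 2 + e j ^+ 2); set S := \sum_j (a j * c j + b j * e j).
have P0 : 0 <= P by apply: sumr_ge0 => j _; apply: addr_ge0; apply: sqr_ge0.
have Q0 : 0 <= Q by apply: sumr_ge0 => j _; apply: addr_ge0; apply: sqr_ge0.
set p := Num.sqrt P; set q := Num.sqrt Q.
have p0 : 0 <= p := sqrtr_ge0 P. have q0 : 0 <= q := sqrtr_ge0 Q.
have pp : p ^+ 2 = P by rewrite sqr_sqrtr.
have qq : q ^+ 2 = Q by rewrite sqr_sqrtr.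
have zero_case (f g h l : 'I_n -> RR) :
    \sum_j (f j ^+ 2 + g j ^+ 2) = 0 -> \sum_j (f j * h j + g j * l j) = 0.
  move=> hs; apply: big1 => j _.
  have := @psumr_eq0P _ _ xpredT (fun j => f j ^+ 2 + g j ^+ 2) (fun j _ => addr_ge0 (sqr_ge0 (f j)) (sqr_ge0 (g j))) hs j isT.
  move=> /eqP; rewrite paddr_eq0 ?sqr_ge0 // !sqrf_eq0 => /andP[/eqP -> /eqP ->].
  by rewrite !mul0r addr0.
case: (eqVneq p 0) => [p_0|pn].
  have : P = 0 by rewrite -pp p_0 expr0n.
  by move/(zero_case a b c e); rewrite /S => ->; rewrite p_0 mul0r.
case: (eqVneq q 0) => [q_0|qn].
  have : Q = 0 by rewrite -qq q_0 expr0n.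
  move/(zero_case c e a b) => h.
  have -> : S = 0 by rewrite /S (eq_bigr (fun j => c j * a j + e j * b j)) ?h // => j _; ring.
  by rewrite q_0 mulr0.
have key : 0 <= \sum_j ((q * a j - p * c j) ^+ 2 + (q * b j - p * e j) ^+ 2).
  by apply: sumr_ge0 => j _; apply: addr_ge0; apply: sqr_ge0.
have ex : \sum_j ((q * a j - p * c j) ^+ 2 + (q * b j - p * e j) ^+ 2)
    = q ^+ 2 * P - 2 * (p * q) * S + p ^+ 2 * Q.
  rewrite /P /Q /S !mulr_sumr -sumrB -big_split /=.
  by apply: eq_bigr => j _; ring.
rewrite ex pp qq in key.
have pqp : 0 < p * q by rewrite mulr_gt0 // lt_def ?pn ?qn.
have : 0 <= (p * q) * (p * q - S).
  have e2 : 2 * ((p * q) * (p * q - S)) = Q * P - 2 * (p * q) * S + P * Q.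
    rewrite -pp -qq; ring.
  rewrite -e2 in key; rewrite -(pmulr_rge0 _ (_ : 0 < 2)) //.
rewrite pmulr_rge0 // subr_ge0 //.
Qed.

Lemma weight_ok (p : RR) (t k : nat) : (0 < k)%N -> 0 <= p -> p <= 1 ->
  (t.+1)%:R * p <= k%:R ->
  p <= Num.sqrt k%:R * ((Num.sqrt (maxn t.+1 k)%:R)^-1 * Num.sqrt p).
Proof.
move=> k0 p0 p1 ht.
set M := maxn t.+1 k.
have Mp : 0 < (M%:R : RR) by rewrite ltr0n /M leq_max k0 orbT.
have sMp : 0 < Num.sqrt (M%:R : RR) by rewrite sqrtr_gt0.
have hpM : p * M%:R <= k%:R.
  rewrite /M; case: (leqP t.+1 k) => h.
    have kp : 0 <= (k%:R : RR) by [].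
    by rewrite -[X in _ <= X]mul1r ler_wpM2r.
  by rewrite mulrC.
have e : Num.sqrt k%:R * ((Num.sqrt M%:R)^-1 * Num.sqrt p) =
    (Num.sqrt k%:R * Num.sqrt p) / Num.sqrt M%:R by rewrite mulrCA mulrC.
rewrite e ler_pdivlMr //.
have lhs : p * Num.sqrt M%:R = Num.sqrt (p ^+ 2 * M%:R).
  by rewrite sqrtrM ?sqr_ge0 // sqrtr_sqr ger0_norm.
rewrite lhs -sqrtrM ?ler0n // ler_sqrt; last by rewrite mulr_ge0 ?ler0n.
rewrite expr2 -mulrA [k%:R * p]mulrC; exact: ler_wpM2l.
Qed.

Section Main.
Variables (k d : nat).
Hypotheses (k1 : (0 < k)%N) (kd : (k <= d)%N).

Definition bw (j : 'I_d) : RR := (Num.sqrt (maxn j.+1 k)%:R)^-1.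

Lemma bw_ge0 j : 0 <= bw j.
Proof. by rewrite invr_ge0 sqrtr_ge0. Qed.

Lemma bw2 j : bw j ^+ 2 = ((maxn j.+1 k)%:R)^-1.
Proof. by rewrite exprVn sqr_sqrtr // ler0n. Qed.

Definition Lw : RR := Hs k d.

Lemma Lw_pos : 0 < Lw.
Proof.
have d0 : (0 < d)%N := leq_trans k1 kd.
rewrite /Lw /Hs (bigD1 (Ordinal d0)) //=.
apply: (@lt_le_trans _ _ ((maxn 1 k)%:R^-1)).
  by rewrite invr_gt0 ltr0n leq_max.
rewrite lerDl; apply: sumr_ge0 => j _; by rewrite invr_ge0 ler0n.
Qed.

Definition vw (j : 'I_d) : RR := bw j / Num.sqrt Lw.

Lemma vw_sum : \sum_j vw j ^+ 2 = 1.
Proof.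
have Lp := Lw_pos.
rewrite (eq_bigr (fun j : 'I_d => ((maxn j.+1 k)%:R)^-1 / Lw)); last first.
  move=> j _; rewrite /vw exprMn bw2 exprVn sqr_sqrtr //; exact: ltW.
by rewrite -mulr_suml -/(Hs k d) -/Lw mulfV // lt0r_neq0.
Qed.

Lemma pick_x (y : 'I_d -> RR) (s : {perm 'I_d}) :
  exists2 x, x \in Xset vw & \sum_j x 0 j * y j = (\sum_j bw (s j) * `|y j|) / Num.sqrt Lw.
Proof.
exists (mkx vw ([ffun j => y j < 0], s)); first by apply/XsetP; eexists.
rewrite mulr_suml; apply: eq_bigr => j _; rewrite mxE ffunE /vw.
case: (ltrP (y j) 0) => h /=.
  by rewrite ltr0_norm // expr1; ring.
by rewrite ger0_norm // expr0; ring.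
Qed.

Lemma ReNi (z : CC) : Re ((- 'i%C) * z) = Im z.
Proof. by case: z => a b /=; ring. Qed.
Lemma ImNi (z : CC) : Im ((- 'i%C) * z) = - Re z.
Proof. by case: z => a b /=; ring. Qed.

Lemma key_U m (U : 'M[CC]_(m, d)) : m = k -> U *m ctr U = 1%:M ->
  exists w, [/\ (w <= U)%MS, sqn w = k%:R &
    exists2 x, x \in Xset vw & Num.sqrt k%:R / (16 * Num.sqrt Lw) <= \sum_j x 0 j * Re (w 0 j)].
Proof.
move=> mk Uu; subst m.
have [s hs] := rank_perm (pc_ge0 U).
rewrite pc_sum // in hs.
have [t [ht|ht]] := avg_main Uu (c := fun j => bw (s j)) (fun j => bw_ge0 _)
   (fun j => weight_ok k1 (pc_ge0 U j) (pc_le1 Uu j) (hs j)).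
  exists (wv U t); split; [exact: wv_sub | exact: wv_sqn |].
  have [x xX ex] := pick_x (fun j => Re (wv U t 0 j)) s.
  exists x => //; rewrite ex.
  have sL : 0 < Num.sqrt Lw by rewrite sqrtr_gt0 Lw_pos.
  rewrite invfM mulrA ler_pM2r ?invr_gt0 //; lra.
exists ((- 'i%C) *: wv U t); split.
- exact: scalemx_sub (wv_sub _ _).
- rewrite -(wv_sqn Uu t) /sqn; apply: eq_bigr => j _; rewrite mxE ReNi ImNi sqrrN.
  by rewrite addrC.
have [x xX ex] := pick_x (fun j => Im (wv U t 0 j)) s.
exists x => //.
rewrite (eq_bigr (fun j => x 0 j * Im (wv U t 0 j))); last first.
  by move=> j _; rewrite mxE ReNi.
rewrite ex.
have sL : 0 < Num.sqrt Lw by rewrite sqrtr_gt0 Lw_pos.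
rewrite invfM mulrA ler_pM2r ?invr_gt0 //; lra.
Qed.
End Main.
Lemma cs1 n (a c : 'I_n -> RR) :
  \sum_j a j * c j <= Num.sqrt (\sum_j a j ^+ 2) * Num.sqrt (\sum_j c j ^+ 2).
Proof.
have := cs2 a (fun _ => 0) c (fun _ => 0).
have E1 : \sum_j (a j * c j + (0:RR) * 0) = \sum_j a j * c j.
  by apply: eq_bigr => j _; rewrite mulr0 addr0.
have E2 : forall f : 'I_n -> RR, \sum_j (f j ^+ 2 + (0:RR) ^+ 2) = \sum_j f j ^+ 2.
  by move=> f; apply: eq_bigr => j _; rewrite expr0n /= addr0.
by rewrite E1 !E2.
Qed.

Lemma finish (N A S L : RR) (k : nat) : (0 < k)%N -> 0 < L ->
  Num.sqrt k%:R / (16 * Num.sqrt L) <= A -> A <= N * Num.sqrt S -> S = k%:R ->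
  (16 * Num.sqrt L)^-1 <= N.
Proof.
move=> k0 L0 h1 h2 hS; subst S.
have sk : 0 < Num.sqrt (k%:R : RR) by rewrite sqrtr_gt0 ltr0n.
have := le_trans h1 h2.
by rewrite mulrC ler_pM2r.
Qed.

Lemma Re_conj (z : CC) : Re (Num.conj z) = Re z.
Proof. by case: z. Qed.

Lemma Re_mulJ (y w : CC) : Re (y * Num.conj w) = Re y * Re w + Im y * Im w.
Proof. by case: y => a b; case: w => c e /=; ring. Qed.

Lemma Re_mulr (z : CC) (r : RR) : Re (z * (r%:C)%C) = Re z * r.
Proof. by rewrite mulrC Re_rmul mulrC. Qed.

Lemma unitary_schmidt n (W : 'M[CC]_n) :
  schmidt (row_base W) *m ctr (schmidt (row_base W)) = 1%:M.
Proof. by apply/unitarymxP/schmidt_unitarymx; rewrite rank_leq_col. Qed.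

Lemma schmidt_subW n (W : 'M[CC]_n) : (schmidt (row_base W) <= W)%MS.
Proof. by rewrite (eqmx_schmidt_free (row_base_free W)) eq_row_base. Qed.

Lemma bound_b k d : (0 < k)%N -> (k <= d)%N ->
  32^-1 / Num.sqrt (Rpower.ln ((2 * d)%:R / k%:R)) <= (16 * Num.sqrt (Lw k d))^-1.
Proof.
move=> k0 kd.
have hL := Hs_log k0 kd.
have Lp := Lw_pos k0 kd.
set l := Rpower.ln _ in hL *.
rewrite -/(Lw k d) in hL.
have l0 : 0 < l by lra.
have e4 : Num.sqrt (4 * l) = 2 * Num.sqrt l.
  rewrite sqrtrM // (_ : 4 = 2 ^+ 2) ?sqrtr_sqr ?ger0_norm //.
  by rewrite expr2 -natrM.
have h1 : Num.sqrt (Lw k d) <= 2 * Num.sqrt l.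
  by rewrite -e4 ler_sqrt; [lra | lra].
have sLp : 0 < Num.sqrt (Lw k d) by rewrite sqrtr_gt0.
have slp : 0 < Num.sqrt l by rewrite sqrtr_gt0.
rewrite -invfM lef_pV2 ?posrE ?mulr_gt0 //.
lra.
Qed.

Theorem theorem1p5 :
  exists c : RR, 0 < c /\
  forall k d : nat, leq 1 k -> leq k d ->
  exists X : seq 'rV[RR]_d,
    on_unit_sphere X /\ transitive_set X /\
    let b := c / Num.sqrt (Stdlib.Reals.Rpower.ln ((2 * d)%:R / k%:R)) in
    (forall W : 'M[RR]_d, \rank W = k ->
       exists2 x, x \in X & forall y, is_rproj W x y -> b <= rnorm y) /\
    (forall W : 'M[CC]_d, \rank W = k ->
       exists2 x, x \in X & forall y, is_cproj W (complexify x) y -> b <= cnorm y).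
Proof.
exists 32^-1; split; first by rewrite invr_gt0.
move=> k d k1 kd.
exists (Xset (@vw k d)); split; first exact: Xset_sphere (vw_sum k1 kd).
split; first exact: Xset_trans.
move=> b.
have hb := bound_b k1 kd.
have Lp := Lw_pos k1 kd.
split.
- move=> W rW.
  pose Wc := map_mx (real_complex RR) W.
  have rWc : \rank Wc = k by rewrite mxrank_map.
  have [w [wU sw [x xX hx]]] := key_U k1 kd rWc (unitary_schmidt Wc).
  exists x => // y [yW hy].
  have wW : (w <= Wc)%MS := submx_trans wU (schmidt_subW Wc).
  pose wr : 'rV[RR]_d := \row_j Re (w 0 j).
  have wrW : (wr <= W)%MS.
    case/submxP: wW => D eD.
    have -> : wr = map_mx (@complex.Re RR) D *m W.
      apply/rowP => j; rewrite /wr eD !mxE raddf_sum; apply: eq_bigr => a _.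
      by rewrite !mxE; exact: Re_mulr.
    exact: submxMl.
  have h0 := hy wr wrW.
  apply: (le_trans hb); apply: (finish k1 Lp hx _ sw).
  have e1 : \sum_j x 0 j * Re (w 0 j) = rdot y wr.
    move: h0; rewrite /rdot (eq_bigr (fun i => x 0 i * wr 0 i - y 0 i * wr 0 i)); last first.
      by move=> i _; rewrite !mxE mulrBl.
    rewrite sumrB => /eqP; rewrite subr_eq0 => /eqP <-.
    by apply: eq_bigr => j _; rewrite mxE.
  rewrite e1 /rdot /rnorm; apply: (le_trans (cs1 _ _)).
  rewrite ler_wpM2l ?sqrtr_ge0 // ler_sqrt; last exact: sqn_ge0.
  apply: ler_sum => j _; rewrite mxE lerDl; exact: sqr_ge0.
- move=> W rW.
  have [w [wU sw [x xX hx]]] := key_U k1 kd rW (unitary_schmidt W).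
  exists x => // y [yW hy].
  have wW : (w <= W)%MS := submx_trans wU (schmidt_subW W).
  have h0 := hy w wW.
  apply: (le_trans hb); apply: (finish k1 Lp hx _ sw).
  have e1 : \sum_j x 0 j * Re (w 0 j) = \sum_j (Re (y 0 j) * Re (w 0 j) + Im (y 0 j) * Im (w 0 j)).
    have : complex.Re (cdot (complexify x - y) w) = 0 by rewrite h0.
    rewrite /cdot raddf_sum (eq_bigr (fun i => (x 0 i * Re (w 0 i)) -
        (Re (y 0 i) * Re (w 0 i) + Im (y 0 i) * Im (w 0 i)))); last first.
      move=> i _; rewrite !mxE mulrBl raddfB /=; congr (_ - _).
        transitivity (x 0 i * Re (Num.conj (w 0 i))); first exact: Re_rmul.
        by rewrite Re_conj.
      exact: Re_mulJ.
    by rewrite sumrB => /eqP; rewrite subr_eq0 => /eqP.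
  rewrite e1 /cnorm; exact: cs2.
Qed.
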